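(* Let $S$ be a left I-order in an inverse semigroup $Q$. Then $S$ is straight in $Q$ if and only if $S$ intersects every $\mathcal{L}$-class of $Q$.
   Context: For an element $a$ of an inverse semigroup $Q$, $a^{-1}$ is its unique inverse. A subsemigroup $S$ of $Q$ is a left I-order in $Q$ if every $q\in Q$ can be written $q=a^{-1}b$ with $a,b\in S$; it is straight in $Q$ if $a,b$ can always be chosen with $a\,\mathcal{R}\,b$ in $Q$. $\mathcal{L},\mathcal{R}$ are Green's relations of $Q$. *)

(* Defs.v *)
Definition associative_op {T : Type} (mul : T -> T -> T) : Prop :=
  forall x y z, mul x (mul y z) = mul (mul x y) z.

Definition is_inverse_of {T : Type} (mul : T -> T -> T) (a b : T) : Prop :=
  mul (mul a b) a = a /\ mul (mul b a) b = b.

Definition inverse_semigroup {T : Type} (mul : T -> T -> T) : Prop :=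
  associative_op mul /\ forall a, exists! b, is_inverse_of mul a b.

(* Green's relations, via principal one-sided ideals Q^1 a. *)
Definition in_left_ideal {T : Type} (mul : T -> T -> T) (a b : T) : Prop :=
  a = b \/ exists x, a = mul x b.
Definition in_right_ideal {T : Type} (mul : T -> T -> T) (a b : T) : Prop :=
  a = b \/ exists x, a = mul b x.

Definition green_L {T : Type} (mul : T -> T -> T) (a b : T) : Prop :=
  in_left_ideal mul a b /\ in_left_ideal mul b a.
Definition green_R {T : Type} (mul : T -> T -> T) (a b : T) : Prop :=
  in_right_ideal mul a b /\ in_right_ideal mul b a.

Definition subsemigroup {T : Type} (mul : T -> T -> T) (S : T -> Prop) : Prop :=
  forall a b, S a -> S b -> S (mul a b).

(* Left I-order: every q is a^{-1} b with a, b in S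
   (a' is "the" inverse of a, unique in an inverse semigroup). *)
Definition left_I_order {T : Type} (mul : T -> T -> T) (S : T -> Prop) : Prop :=
  subsemigroup mul S /\
  forall q, exists a b a', S a /\ S b /\ is_inverse_of mul a a' /\ q = mul a' b.

Definition straight_left_I_order {T : Type} (mul : T -> T -> T) (S : T -> Prop) : Prop :=
  forall q, exists a b a', S a /\ S b /\ is_inverse_of mul a a' /\
    green_R mul a b /\ q = mul a' b.

Definition meets_every_L_class {T : Type} (mul : T -> T -> T) (S : T -> Prop) : Prop :=
  forall q, exists s, S s /\ green_L mul s q.

(* Main.v *)
Require Import Defs.
From Stdlib Require Import Setoid.

Section Sg.
Variable T : Type.
Variable mul : T -> T -> T.
Hypothesis HQ : inverse_semigroup mul.
Local Infix "*" := mul.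

Lemma ra x y z : (x*y)*z = x*(y*z).
Proof. symmetry; apply (proj1 HQ). Qed.

Ltac ac := repeat rewrite ra; reflexivity.
Ltac step t := transitivity t; [ac|].

Lemma inv_uniq a y1 y2 :
  is_inverse_of mul a y1 -> is_inverse_of mul a y2 -> y1 = y2.
Proof.
  intros H1 H2. destruct (proj2 HQ a) as [b [_ U]].
  rewrite <- (U _ H1), <- (U _ H2). reflexivity.
Qed.

Lemma idem_prod e f : e*e = e -> f*f = f -> (e*f)*(e*f) = e*f.
Proof.
  intros He Hf.
  destruct (proj2 HQ (e*f)) as [x [[Hx1 Hx2] _]].
  assert (Hz : is_inverse_of mul (e*f) (f*(x*e))).
  { split.
    - step ((e*(f*f))*(x*((e*e)*f))). rewrite Hf, He.
      step (((e*f)*x)*(e*f)). exact Hx1.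
    - step (f*(((x*((e*e)*(f*f)))*x)*e)). rewrite He, Hf, Hx2. reflexivity. }
  assert (Hxz : x = f*(x*e)) by (apply (inv_uniq (e*f)); [split; assumption | exact Hz]).
  assert (Hxx : x*x = x).
  { transitivity ((f*(x*e))*(f*(x*e))); [rewrite <- Hxz; reflexivity|].
    step (f*(((x*(e*f))*x)*e)). rewrite Hx2. symmetry; exact Hxz. }
  assert (Hex : e*f = x).
  { apply (inv_uniq x).
    - split; assumption.
    - split; rewrite !Hxx; reflexivity. }
  rewrite Hex. exact Hxx.
Qed.

Lemma idem_comm e f : e*e = e -> f*f = f -> e*f = f*e.
Proof.
  intros He Hf.
  apply (inv_uniq (e*f)).
  - split; rewrite !(idem_prod e f He Hf); reflexivity.
  - split.
    + step (((e*(f*f))*(e*e))*f). rewrite Hf, He.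
      step ((e*f)*(e*f)). apply idem_prod; assumption.
    + step (((f*(e*e))*(f*f))*e). rewrite He, Hf.
      step ((f*e)*(f*e)). apply idem_prod; assumption.
Qed.

Lemma inv_idem a a' : is_inverse_of mul a a' -> (a*a')*(a*a') = a*a'.
Proof. intros [H1 H2]. step (((a*a')*a)*a'). rewrite H1. reflexivity. Qed.

Lemma inv_idem' a a' : is_inverse_of mul a a' -> (a'*a)*(a'*a) = a'*a.
Proof. intros [H1 H2]. step (((a'*a)*a')*a). rewrite H2. reflexivity. Qed.

Lemma inv_prod x x' c c' : is_inverse_of mul x x' -> is_inverse_of mul c c' ->
  x*(c*c') = x -> is_inverse_of mul (x*c) (c'*x').
Proof.
  intros Hx Hc Hxc. pose proof Hx as [Hx1 Hx2]. pose proof Hc as [Hc1 Hc2]. split.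
  - step ((((x*(c*c'))*x')*x)*c). rewrite Hxc.
    step (((x*x')*x)*c). rewrite Hx1. reflexivity.
  - step (c'*(((x'*x)*(c*c'))*x')).
    rewrite <- (idem_comm _ _ (inv_idem c c' Hc) (inv_idem' x x' Hx)).
    step (((c'*c)*c')*((x'*x)*x')). rewrite Hc2, Hx'2 || rewrite Hc2, Hx2. reflexivity.
Qed.

End Sg.

Theorem lemma2p1 (Q : Type) (mul : Q -> Q -> Q) (S : Q -> Prop)
  (HQ : inverse_semigroup mul) (HS : left_I_order mul S) :
  straight_left_I_order mul S <-> meets_every_L_class mul S.
Proof.
  pose proof (ra Q mul HQ) as ra'.
  split.
  - intros Hst q. destruct (Hst q) as [a [b [a' [Sa [Sb [[Ha1 Ha2] [[_ [Hba|[z Hz]]] Hq]]]]]]].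
    + exists b. split; [exact Sb|]. split; right.
      * exists a. rewrite Hq. subst b. rewrite <- ra'. symmetry; exact Ha1.
      * exists a'. exact Hq.
    + exists b. split; [exact Sb|]. split; right.
      * exists a. rewrite Hq, Hz, <- !ra', Ha1. reflexivity.
      * exists a'. exact Hq.
  - intros HL q. destruct HS as [Hsub HI].
    destruct (HI q) as [c [d [c' [Sc [Sd [Hc Hq]]]]]].
    destruct (proj2 HQ d) as [d' [Hd _]].
    pose proof Hc as [Hc1 Hc2]. pose proof Hd as [Hd1 Hd2].
    pose proof (inv_idem Q mul HQ c c' Hc) as He1.
    pose proof (inv_idem Q mul HQ d d' Hd) as He2.
    pose proof (idem_prod Q mul HQ _ _ He1 He2) as Hf.
    destruct (HL (mul (mul c c') (mul d d'))) as [x [Sx [HL1 HL2]]].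
    destruct (proj2 HQ x) as [x' [Hx _]].
    pose proof Hx as [Hx1 Hx2].
    pose proof (inv_idem' Q mul HQ x x' Hx) as Hxi.
    assert (Hxf : mul x (mul (mul c c') (mul d d')) = x).
    { destruct HL1 as [E|[u E]].
      - rewrite E at 1. rewrite Hf. symmetry; exact E.
      - rewrite E, ra', Hf. reflexivity. }
    assert (Hfx : mul (mul (mul c c') (mul d d')) (mul x' x) = mul (mul c c') (mul d d')).
    { destruct HL2 as [E|[v E]].
      - rewrite E, <- ra', Hx1. reflexivity.
      - rewrite E, ra', <- (ra' x x' x), Hx1. reflexivity. }
    assert (Hxc : mul x (mul c c') = x).
    { rewrite <- Hxf at 1.
      transitivity (mul x (mul (mul c c') (mul (mul d d') (mul c c')))); [rewrite !ra'; reflexivity|].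
      rewrite (idem_comm Q mul HQ _ _ He2 He1).
      transitivity (mul x (mul (mul (mul c c') (mul c c')) (mul d d'))); [rewrite !ra'; reflexivity|].
      rewrite He1. exact Hxf. }
    assert (Hxd : mul x (mul d d') = x).
    { rewrite <- Hxf at 1.
      transitivity (mul x (mul (mul c c') (mul (mul d d') (mul d d')))); [rewrite !ra'; reflexivity|].
      rewrite He2. exact Hxf. }
    exists (mul x c), (mul x d), (mul c' x').
    split; [apply Hsub; assumption|].
    split; [apply Hsub; assumption|].
    split; [apply (inv_prod Q mul HQ); assumption|].
    split.
    + split; right.
      * exists (mul (mul d' x') (mul x c)).
        transitivity (mul (mul (mul (mul x (mul d d')) x') x) c); [|rewrite !ra'; reflexivity].
        rewrite Hxd, Hx1. reflexivity.
      * exists (mul (mul c' x') (mul x d)).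
        transitivity (mul (mul (mul (mul x (mul c c')) x') x) d); [|rewrite !ra'; reflexivity].
        rewrite Hxc, Hx1. reflexivity.
    + rewrite Hq. symmetry.
      transitivity (mul (mul (mul (mul c' c) c') (mul x' x)) (mul (mul d d') d));
        [rewrite Hc2, Hd1, !ra'; reflexivity|].
      transitivity (mul c' (mul (mul (mul (mul c c') (mul x' x)) (mul d d')) d));
        [rewrite !ra'; reflexivity|].
      rewrite (idem_comm Q mul HQ _ _ He1 Hxi).
      transitivity (mul c' (mul (mul (mul x' x) (mul (mul c c') (mul d d'))) d));
        [rewrite !ra'; reflexivity|].
      rewrite <- (idem_comm Q mul HQ _ _ Hf Hxi), Hfx.
      transitivity (mul (mul (mul c' c) c') (mul (mul d d') d)); [rewrite !ra'; reflexivity|].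
      rewrite Hc2, Hd1. reflexivity.
Qed.
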